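(* Let $S$ be an entropy function for a finite set $X$, let $X'\subset X$, let $R$ be a new element not in $X$, $Y:=X'\cup\{R\}$, and let $T$ be the entropy function on $Y$ defined by $T(A):=S(A)$ and $T(A\cup\{R\}):=S(A\cup(X\setminus X'))$ for $A\subseteq X'$. Given any EDF $g$ for $T$, there exists an EDF $f$ for $S$ with $f(x)=g(x)$ for all $x\in X'$ and $\sum_{x\in X\setminus X'}f(x)=g(R)$.
   Context: An entropy function for a finite set $X$ is a function $S:2^X\to[0,\infty)$ with $S(\emptyset)=0$, $S(A)+S(B)\ge S(A\cap B)+S(A\cup B)$ and $S(A)+S(B)\ge S(A\setminus B)+S(B\setminus A)$ for all $A,B\subseteq X$. An entanglement distribution function (EDF) for $S$ is a function $f:X\to\mathbb R$ with $\big|\sum_{x\in A}f(x)\big|\le S(A)$ for all $A\subseteq X$. *)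

(* Defs.v *)
From mathcomp Require Import all_boot all_order all_algebra.
From mathcomp Require Import reals.
Set Implicit Arguments. Unset Strict Implicit. Unset Printing Implicit Defensive.
Import Order.TTheory GRing.Theory Num.Theory.
Local Open Scope ring_scope.

Definition entropy_fun (X : finType) (R : numDomainType) (S : {set X} -> R) : Prop :=
  [/\ S set0 = 0,
      forall A, 0 <= S A,
      forall A B, S (A :&: B) + S (A :|: B) <= S A + S B
    & forall A B, S (A :\: B) + S (B :\: A) <= S A + S B].

Definition EDF (X : finType) (R : numDomainType) (S : {set X} -> R) (f : X -> R) : Prop :=
  forall A : {set X}, `| \sum_(x in A) f x | <= S A.

(* Y := X' ∪ {R}, realised as option {x | x \in X'}, with the new element
   R represented by None. *)
Definition Yset (X : finType) (X' : {set X}) : finType := option {x : X | x \in X'}.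

Definition restrT (X : finType) (R : numDomainType) (X' : {set X})
    (S : {set X} -> R) (B : {set Yset X'}) : R :=
  S ([set val y | y : {x : X | x \in X'} & Some y \in B]
       :|: (if None \in B then ~: X' else set0)).

(* Main.v *)
Require Import Defs.
From mathcomp Require Import all_boot all_order all_algebra.
From mathcomp Require Import reals ring lra.
Import Order.TTheory GRing.Theory Num.Theory.
Local Open Scope ring_scope.

Section Core.
Variables (R : realDomainType) (X : finType) (S : {set X} -> R).
Hypothesis HS : entropy_fun S.

Lemma S0 : S set0 = 0. Proof. by case: HS. Qed.
Lemma Ssub A B : S (A :&: B) + S (A :|: B) <= S A + S B. Proof. by case: HS. Qed.
Lemma Sdif A B : S (A :\: B) + S (B :\: A) <= S A + S B. Proof. by case: HS. Qed.

Lemma helper_diff (W Y : {set X}) (h : X -> R) (A A' : {set X}) :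
  (forall B : {set X}, B \subset ~: W -> `|\sum_(x in B) h x| <= S B) ->
  Y \subset W -> A \subset ~: W -> A' \subset ~: W ->
  `|\sum_(x in A) h x - \sum_(x in A') h x| <= S (A :|: Y) + S (A' :|: Y).
Proof.
move=> H1 YW AW A'W.
have e1 : A :\: A' = (A :|: Y) :\: (A' :|: Y).
  apply/setP=> x; rewrite !inE.
  case xA: (x \in A); case xA': (x \in A'); case xY: (x \in Y) => //=.
  by have := subsetP AW x xA; rewrite inE (subsetP YW x xY).
have e2 : A' :\: A = (A' :|: Y) :\: (A :|: Y).
  apply/setP=> x; rewrite !inE.
  case xA: (x \in A); case xA': (x \in A'); case xY: (x \in Y) => //=.
  by have := subsetP A'W x xA'; rewrite inE (subsetP YW x xY).
apply: le_trans (_ : S (A :\: A') + S (A' :\: A) <= _); last by rewrite e1 e2 Sdif.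
rewrite (big_setID A') (big_setID A (A := A')) /= setIC.
rewrite opprD addrACA subrr add0r.
apply: le_trans (ler_normB _ _) _.
apply: lerD; apply: H1.
  exact: subset_trans (subsetDl _ _) AW.
exact: subset_trans (subsetDl _ _) A'W.
Qed.

Lemma helper_sum (W Y1 Y2 : {set X}) (h : X -> R) (c : R) (A A' : {set X}) :
  (forall B : {set X}, B \subset ~: W -> `|\sum_(x in B) h x| <= S B) ->
  (forall B : {set X}, B \subset ~: W -> `|\sum_(x in B) h x + c| <= S (B :|: W)) ->
  Y1 :|: Y2 = W -> [disjoint Y1 & Y2] -> A \subset ~: W -> A' \subset ~: W ->
  `|\sum_(x in A) h x + \sum_(x in A') h x + c| <= S (A :|: Y1) + S (A' :|: Y2).
Proof.
move=> H1 H2 eW dY AW A'W.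
have e1 : A :&: A' = (A :|: Y1) :&: (A' :|: Y2).
  apply/setP=> x; rewrite !inE.
  have := subsetP AW x; have := subsetP A'W x; rewrite !inE -eW !inE.
  have := disjointFr dY (x:=x).
  case: (x \in A); case: (x \in A'); case: (x \in Y1); case: (x \in Y2) => //=;
  move=> a b c0.
  all: try first [ exact: (a isT) | exact: (b isT) | exact: (c0 isT) | discriminate (a isT) | discriminate (b isT) | discriminate (c0 isT)].
have e2 : (A :|: A') :|: W = (A :|: Y1) :|: (A' :|: Y2).
  apply/setP=> x; rewrite -eW !inE.
  by case: (x \in A); case: (x \in A'); case: (x \in Y1); case: (x \in Y2).
apply: le_trans (_ : S (A :&: A') + S ((A :|: A') :|: W) <= _); last by rewrite e1 e2 Ssub.
have -> : \sum_(x in A) h x + \sum_(x in A') h x =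
          \sum_(x in A :&: A') h x + \sum_(x in A :|: A') h x.
  rewrite (big_setID A' (A := A)) (big_setID A' (A := A :|: A')) /=.
  have -> : (A :|: A') :&: A' = A' by apply/setIidPr; exact: subsetUr.
  have -> : (A :|: A') :\: A' = A :\: A' by rewrite setDUl setDv setU0.
  by rewrite -!addrA; congr (_ + _); rewrite addrC.
rewrite -addrA; apply: le_trans (ler_normD _ _) _.
apply: lerD; first by apply: H1; exact: subset_trans (subsetIl _ _) AW.
by apply: H2; rewrite subUset AW.
Qed.

Lemma exists_between (I : finType) (i0 : I) (L U : I -> R) :
  (forall i j, L i <= U j) -> exists d, (forall i, L i <= d) /\ (forall j, d <= U j).
Proof.
move=> H; exists (\big[Order.max/L i0]_i L i); split.
  by move=> i; apply: le_bigmax.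
by move=> j; apply: bigmax_le => // i _.
Qed.

Lemma gen n : forall (W : {set X}), #|W| = n -> forall (h : X -> R) (c : R),
  (forall B : {set X}, B \subset ~: W -> `|\sum_(x in B) h x| <= S B) ->
  (forall B : {set X}, B \subset ~: W -> `|\sum_(x in B) h x + c| <= S (B :|: W)) ->
  exists f : X -> R, [/\ forall A : {set X}, `|\sum_(x in A) f x| <= S A,
     forall x, x \in ~: W -> f x = h x & \sum_(x in W) f x = c].
Proof.
elim: n => [|n IH] W cW h c H1 H2.
  move/eqP: cW; rewrite cards_eq0 => /eqP WE; subst W.
  exists h; split => //.
    by move=> A; apply: H1; rewrite setC0 subsetT.
  have := H2 set0; rewrite sub0set setU0 S0 big_set0 add0r => /(_ isT).
  by rewrite normr_le0 => /eqP ->.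
have [z Wz] : exists z, z \in W.
  by apply/set0Pn; rewrite -cards_eq0 cW.
set W' := W :\ z.
have cW' : #|W'| = n by move: cW; rewrite (cardsD1 z W) Wz add1n => -[].
set hs := fun B : {set X} => \sum_(x in B) h x.
pose L := fun B : {set X} => let A := B :&: ~: W in
  Order.max (- S (A :|: [set z]) - hs A) (hs A + c - S (A :|: W')).
pose U := fun B : {set X} => let A := B :&: ~: W in
  Order.min (S (A :|: [set z]) - hs A) (hs A + c + S (A :|: W')).
have dW : [set z] :|: W' = W by rewrite setD1K.
have disW : [disjoint [set z] & W'].
  by rewrite disjoints1 !inE eqxx.
have zW : [set z] \subset W by rewrite sub1set.
have W'W : W' \subset W by exact: subsetDl.
have LU : forall B B', L B <= U B'.
  move=> B B'; rewrite /L /U /=.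
  set A := B :&: ~: W; set A' := B' :&: ~: W.
  have AW : A \subset ~: W by exact: subsetIr.
  have A'W : A' \subset ~: W by exact: subsetIr.
  have k1 := @helper_diff W [set z] h A' A H1 zW A'W AW.
  have k2 := @helper_diff W W' h A A' H1 W'W AW A'W.
  have k3 := @helper_sum W [set z] W' h c A A' H1 H2 dW disW AW A'W.
  have k4 := @helper_sum W [set z] W' h c A' A H1 H2 dW disW A'W AW.
  rewrite ge_max !le_min; rewrite /hs.
  move: k1 k2 k3 k4; rewrite !ler_norml => /andP[k1 k1'] /andP[k2 k2'] /andP[k3 k3'] /andP[k4 k4'].
  by apply/andP; split; apply/andP; split; lra.
have [d [Ld Ud]] := @exists_between _ set0 L U LU.
have bnd : forall A0 : {set X}, A0 \subset ~: W ->
    `|hs A0 + d| <= S (A0 :|: [set z]) /\ `|hs A0 + c - d| <= S (A0 :|: W').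
  move=> A0 A0W; have := Ld A0; have := Ud A0; rewrite /L /U /=.
  rewrite (setIidPl A0W) ge_max le_min => /andP[u1 u2] /andP[l1 l2].
  by rewrite !ler_norml; split; apply/andP; split; lra.
have sub1 : forall B : {set X}, B \subset ~: W' -> z \notin B -> B \subset ~: W.
  move=> B BW zB; apply/subsetP=> x xB; have := subsetP BW x xB.
  rewrite !inE; case: eqP => [xz|] //=; by rewrite -xz xB in zB.
have sub2 : forall B : {set X}, B \subset ~: W' -> B :\ z \subset ~: W.
  move=> B BW; apply/subsetP=> x; rewrite !inE => /andP[xz xB].
  by have := subsetP BW x xB; rewrite !inE xz.
pose h' := fun x => if x == z then d else h x.
have eqh : forall B : {set X}, z \notin B -> \sum_(x in B) h' x = hs B.
  move=> B zB; apply: eq_bigr => x xB; rewrite /h'; case: eqP => // xz.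
  by rewrite -xz xB in zB.
have eqh2 : forall B : {set X}, z \in B -> \sum_(x in B) h' x = d + hs (B :\ z).
  move=> B zB; rewrite (big_setD1 z zB) /h' eqxx; congr (_ + _).
  by apply: eq_bigr => x; rewrite !inE => /andP[/negbTE -> _].
have H1' : forall B : {set X}, B \subset ~: W' -> `|\sum_(x in B) h' x| <= S B.
  move=> B BW; case zB: (z \in B).
    rewrite eqh2 // addrC.
    have [b1 _] := bnd _ (sub2 B BW).
    by rewrite -{2}(setD1K zB) setUC.
  by rewrite eqh ?zB //; apply: H1; apply: sub1 => //; rewrite zB.
have H2' : forall B : {set X},
   B \subset ~: W' -> `|\sum_(x in B) h' x + (c - d)| <= S (B :|: W').
  move=> B BW; case zB: (z \in B).
    rewrite eqh2 // (_ : d + hs (B :\ z) + (c - d) = hs (B :\ z) + c); last by ring.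
    have -> : B :|: W' = (B :\ z) :|: W.
      apply/setP=> x; rewrite !inE; case: eqP => [->|] //=; by rewrite zB Wz.
    by apply: H2; apply: sub2.
  rewrite eqh ?zB // addrA.
  by have [_ b2] := bnd _ (sub1 B BW (negbT zB)).
have [f [Hf1 Hf2 Hf3]] := IH W' cW' h' (c - d) H1' H2'.
exists f; split => //.
  move=> x xW; rewrite Hf2; last by rewrite !inE negb_and negbK orbC -(negbK (x \in W)) -in_setC xW.
  rewrite /h'; case: eqP => // xz; by rewrite xz inE Wz in xW.
rewrite (big_setD1 z Wz) Hf3 Hf2; last by rewrite !inE eqxx.
by rewrite /h' eqxx /= addrCA subrr addr0.
Qed.
End Core.

Theorem theorem24 (R : realType) (X : finType) (S : {set X} -> R)
    (X' : {set X}) (g : Yset X' -> R) :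
  entropy_fun S ->
  EDF (restrT S) g ->
  exists f : X -> R,
    [/\ EDF S f,
        (forall (x : X) (hx : x \in X'), f x = g (Some (exist _ x hx)))
      & \sum_(x in ~: X') f x = g None].
Proof.
move=> HS Hg.
pose h := fun x : X => if (insub x : option {x : X | x \in X'}) is Some y
  then g (Some y) else 0.
have key : forall B : {set X}, B \subset X' ->
  let BY := [set Some y | y in [set y : {x : X | x \in X'} | val y \in B]] in
  [/\ \sum_(y in BY) g y = \sum_(x in B) h x,
      [set val y | y : {x : X | x \in X'} & Some y \in BY] = B
    & None \notin BY].
  move=> B BX' BY; split.
  - rewrite big_imset /=; last by move=> a b _ _ [].
    have eB : B = [set val y | y in [set y : {x : X | x \in X'} | val y \in B]].
      apply/setP=> x; apply/idP/imsetP.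
        move=> xB; exists (exist _ x (subsetP BX' x xB)) => //.
        by rewrite inE.
      by move=> [y]; rewrite inE => yB ->.
    rewrite [in RHS]eB big_imset /=; last by move=> a b _ _; apply: val_inj.
    by apply: eq_bigr => y _; rewrite /h valK.
  - apply/setP=> x; apply/imsetP/idP.
      by move=> [y]; rewrite inE mem_imset; [rewrite inE => yB -> | move=> a b []].
    move=> xB; exists (exist _ x (subsetP BX' x xB)) => //.
    by rewrite inE mem_imset ?inE //; move=> a b [].
  - by apply/imsetP => -[].
have H1 : forall B : {set X}, B \subset ~: ~: X' -> `|\sum_(x in B) h x| <= S B.
  move=> B; rewrite setCK => BX'; have [e1 e2 e3] := key B BX'.
  have := Hg [set Some y | y in [set y : {x : X | x \in X'} | val y \in B]].
  by rewrite e1 /restrT e2 (negbTE e3) setU0.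
have H2 : forall B : {set X}, B \subset ~: ~: X' ->
    `|\sum_(x in B) h x + g None| <= S (B :|: ~: X').
  move=> B; rewrite setCK => BX'; have [e1 e2 e3] := key B BX'.
  have := Hg (None |: [set Some y | y in [set y : {x : X | x \in X'} | val y \in B]]).
  rewrite big_setU1 //= e1 addrC /restrT setU11.
  set BYs := [set Some y | y in _].
  have e4 : [set \val y | y : {x : X | x \in X'} & Some y \in None |: BYs] = B.
    rewrite -[RHS]e2; apply/setP=> x; apply/imsetP/imsetP => -[y];
      rewrite !inE => yB ->; exists y => //; rewrite !inE //.
  by move=> H; apply: le_trans H _; rewrite e4.
have [f [Hf1 Hf2 Hf3]] := @gen R X S HS _ (~: X') (erefl _) h (g None) H1 H2.
exists f; split => //.
move=> x hx; rewrite Hf2; last by rewrite setCK.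
by rewrite /h insubT.
Qed.
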